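(* Let $A\in\mathbb C^{n\times n}$, $b\in\mathbb C^n$, and let $M, F\in\mathbb C^{n\times n}$ be nonsingular. Partition the index set $\{1,\dots,n\}$ into $m$ consecutive blocks, and write accordingly $x = (x^{(1)},\dots,x^{(m)})$, $b=(b^{(1)},\dots,b^{(m)})$, and $A = (A^{(s,q)})_{s,q=1}^m$ in block form; assume $M$ and $F$ are block diagonal with respect to this partition, with nonsingular diagonal blocks $M^{(1)},\dots,M^{(m)}$ and $F^{(1)},\dots,F^{(m)}$. Let $I$ be the $n\times n$ identity and \[ Q := \begin{bmatrix} 0 & I - M^{-1}A \\ I - F^{-1}A & 0 \end{bmatrix}. \] Consider any sequence of subsets $\Omega_k\subseteq\{1,\dots,m\}$, $k\in\mathbb N$, such that each $s\in\{1,\dots,m\}$ belongs to $\Omega_k$ for infinitely many $k$, and any functions $\delta_s(q,k)\in\mathbb N$ ($s,q\in\{1,\dots,m\}$, $k\in\mathbb N$) with $\delta_s(q,k)\le k$ and $\lim_{k\to\infty}\delta_s(q,k)=\infty$ for all $s,q$. Given an arbitrary initial vector $x^0$, define the asynchronous alternating iteration: for each $k\in\mathbb N$ and all $s\in\{1,\dots,m\}$, \[ y^{(s),k} := x^{(s),\delta_s(s,k)} + {M^{(s)}}^{-1}\Big(b^{(s)} - \sum_{q=1}^m A^{(s,q)} x^{(q),\delta_s(q,k)}\Big), \] \[ x^{(s),k+1} := \begin{cases} y^{(s),\delta_s(s,k)} + {F^{(s)}}^{-1}\Big(b^{(s)} - \displaystyle\sum_{q=1}^m A^{(s,q)} y^{(q),\delta_s(q,k)}\Big)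 & \text{if } s\in\Omega_k,\\[1ex] x^{(s),k} & \text{if } s\notin\Omega_k.\end{cases} \] If $\rho(|Q|)<1$, then for every initial guess $x^0$, every such sequence $\{\Omega_k\}$ and every such delay functions $\delta_1,\dots,\delta_m$, the sequence $x^k$ converges to the solution of $Ax=b$.
   Context: For a matrix $\mathcal A$, $|\mathcal A|$ denotes the entrywise absolute value (modulus) and $\rho(\mathcal A)$ denotes its spectral radius. *)

(* Defs.v *)
From HB Require Import structures.
From mathcomp Require Import all_boot all_order all_algebra.
From mathcomp Require Import complex.
From mathcomp Require Import classical_sets reals.
Set Implicit Arguments. Unset Strict Implicit. Unset Printing Implicit Defensive.
Import Order.TTheory GRing.Theory Num.Theory.
Local Open Scope ring_scope.
Local Open Scope complex_scope.

Definition spectral_radius (R : realType) (N : nat) (B : 'M[R[i]]_N) : R :=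
  sup [set Normc.normc l | l in [set l | eigenvalue B l]]%classic.

Definition mx_abs (R : realType) (N1 N2 : nat) (B : 'M[R[i]]_(N1, N2)) : 'M[R[i]]_(N1, N2) :=
  map_mx (fun z => `|z|) B.

Definition vblk (T : Type) (m : nat) (p : 'I_m -> nat)
  (x : 'cV[T]_(\sum_(i < m) p i)) (s : 'I_m) : 'cV[T]_(p s) :=
  @submxcol T m p 1 x s.

Definition mblk (T : Type) (m : nat) (p : 'I_m -> nat)
  (A : 'M[T]_(\sum_(i < m) p i)) (s q : 'I_m) : 'M[T]_(p s, p q) :=
  @submxblock T m m p p A s q.

Definition cvg_to (R : realType) (N : nat) (x : nat -> 'cV[R[i]]_N) (l : 'cV[R[i]]_N) : Prop :=
  forall e : R, 0 < e -> exists K : nat, forall k : nat, (K <= k)%N ->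
    forall j : 'I_N, Normc.normc (x k j 0 - l j 0) < e.

(* Main.v *)
Require Import Defs.
From HB Require Import structures.
From mathcomp Require Import all_boot all_order all_algebra.
From mathcomp Require Import complex.
From mathcomp Require Import classical_sets reals.
From mathcomp Require Import ring lra.
Import Order.TTheory GRing.Theory Num.Theory.
Local Open Scope ring_scope.
Section Aux.
Variable R : realType.
Local Open Scope complex_scope.
Local Notation C := R[i].
Local Notation nc := (@Normc.normc R).

Lemma nc_ge0 (z : C) : 0 <= nc z.
Proof. by case: z => a b; rewrite /= sqrtr_ge0. Qed.
Lemma ncD (x y : C) : nc (x + y) <= nc x + nc y.
Proof. exact: le_normcD. Qed.
Lemma ncM (x y : C) : nc (x * y) = nc x * nc y.
Proof. exact: Normc.normcM. Qed.
Lemma nc0 : nc 0 = 0.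
Proof. exact: Normc.normc0. Qed.
Lemma ncN (x : C) : nc (- x) = nc x.
Proof. exact: normcN. Qed.
Lemma ncR (r : R) : nc r%:C = `|r|.
Proof. by rewrite /= expr0n /= addr0 sqrtr_sqr. Qed.
Lemma nc_sum (I : Type) (r : seq I) (P : pred I) (F : I -> C) :
  nc (\sum_(i <- r | P i) F i) <= \sum_(i <- r | P i) nc (F i).
Proof.
apply: (big_ind2 (fun a b => nc a <= b)); first by rewrite nc0.
  move=> x1 x2 y1 y2 h1 h2; apply: le_trans (ncD _ _) _; exact: lerD.
by [].
Qed.
Lemma abs_nc (z : C) : `|z| = (nc z)%:C.
Proof. by []. Qed.

Lemma geo (r e : R) : 0 <= r -> r < 1 -> 0 < e -> exists t : nat, r ^+ t < e.
Proof.
move=> r0 r1 e0.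
have [->|rn0] := eqVneq r 0; first by exists 1%N; rewrite expr1.
have rp : 0 < r by rewrite lt_def rn0 r0.
set h := r^-1 - 1.
have hp : 0 < h by rewrite /h subr_gt0 invf_gt1.
have bern : forall t : nat, 1 + t%:R * h <= (1 + h) ^+ t.
  elim=> [|t IH]; first by rewrite expr0 mul0r addr0.
  rewrite exprSr -natr1.
  have hX : 0 <= (1 + h) ^+ t by apply: exprn_ge0; lra.
  have t0 : 0 <= (t%:R : R) by apply: ler0n.
  nra.
have rX : forall t : nat, r ^+ t * (1 + h) ^+ t = 1.
  by move=> t; rewrite -exprMn /h addrC subrK divff // expr1n.
have [t ht] : exists t : nat, (e * h)^-1 < t%:R.
  exists (Num.bound (e * h)^-1); apply: archi_boundP.
  by rewrite invr_ge0 ltW // mulr_gt0.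
exists t.
have := rX t; have := bern t; set X := (1 + h) ^+ t; set P := r ^+ t => b rx.
have Pge : 0 <= P by apply: exprn_ge0.
have ehp : 0 < e * h by apply: mulr_gt0.
have : 1 < e * h * t%:R.
  have : e * h * (e * h)^-1 < e * h * t%:R by rewrite ltr_pM2l.
  by rewrite mulfV //; exact: lt0r_neq0.
move=> eht.
have eX : 1 < e * X by nra.
have X0 : 0 < X by nra.
nra.
Qed.

Definition conv0 (f : nat -> C) := forall e : R, 0 < e ->
  exists K : nat, forall k : nat, (K <= k)%N -> nc (f k) < e.

Lemma decay (z : C) (a c : nat -> C) : nc z < 1 ->
  (forall k, a k.+1 = z * a k + c k) -> conv0 c -> conv0 a.
Proof.
move=> z1 rec hc e e0.
set r := nc z; have r0 : 0 <= r := nc_ge0 z.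
have eta0 : 0 < e * (1 - r) / 2.
  by apply: divr_gt0 => //; apply: mulr_gt0 => //; rewrite subr_gt0.
have [K0 hK0] := hc _ eta0.
set B := nc (a K0).
have B0 : 0 <= B := nc_ge0 _.
have claim : forall t : nat, nc (a (K0 + t)%N) - e / 2 <= r ^+ t * B.
  elim=> [|t IH]; first by rewrite addn0 expr0 mul1r /B; lra.
  rewrite addnS rec.
  have h1 := ncD (z * a (K0 + t)%N) (c (K0 + t)%N).
  rewrite ncM in h1.
  have h2 := hK0 (K0 + t)%N (leq_addr _ _).
  have h3 : r * (nc (a (K0 + t)%N) - e / 2) <= r * (r ^+ t * B).
    by apply: ler_wpM2l.
  rewrite exprS -mulrA; rewrite -/r in h1.
  have t0 : 0 <= (t%:R : R) by apply: ler0n.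
  nra.
have q0 : 0 < e / 2 / (B + 1) by apply: divr_gt0; lra.
have [t ht] := @geo r _ r0 z1 q0.
exists (K0 + t)%N => k hk.
have -> : k = (K0 + (t + (k - (K0 + t))))%N by rewrite addnA subnKC.
have := claim (t + (k - (K0 + t)))%N.
rewrite exprD.
set P := r ^+ t; set P' := r ^+ (k - (K0 + t)).
have P0 : 0 <= P by apply: exprn_ge0.
have P'0 : 0 <= P' by apply: exprn_ge0.
have P'1 : P' <= 1 by apply: exprn_ile1 => //; exact: ltW.
have hq : e / 2 / (B + 1) * (B + 1) = e / 2.
  by rewrite divfK //; apply: lt0r_neq0; lra.
have : P * P' * B <= P * B by rewrite -mulrA ler_wpM2l // ler_piMl.
have : P * (B + 1) < e / 2 / (B + 1) * (B + 1).
  by rewrite ltr_pM2r //; lra.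
rewrite hq; lra.
Qed.


Lemma mem_le_sum (s : seq C) (z : C) : z \in s -> nc z <= \sum_(w <- s) nc w.
Proof.
elim: s => [|w s IH] //; rewrite in_cons big_cons => /orP[/eqP->|hz].
  by rewrite lerDl; apply: sumr_ge0 => i _; apply: nc_ge0.
by apply: le_trans (IH hz) _; rewrite lerDr nc_ge0.
Qed.

Lemma sr_roots (N : nat) (B : 'M[C]_N) : spectral_radius B < 1 ->
  forall l, root (char_poly B) l -> nc l < 1.
Proof.
move=> hsr l hl; apply: le_lt_trans hsr; rewrite /spectral_radius.
have [rs hrs] := closed_field_poly_normal (char_poly B).
rewrite (monicP (char_poly_monic B)) scale1r in hrs.
have ub : forall l', root (char_poly B) l' -> nc l' <= \sum_(w <- rs) nc w.
  by move=> l'; rewrite hrs root_prod_XsubC; apply: mem_le_sum.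
apply: ub_le_sup.
  exists (\sum_(w <- rs) nc w) => x [l' hl' <-]; apply: ub.
  by move: hl'; rewrite /= eigenvalue_root_char.
by exists l => //=; rewrite eigenvalue_root_char.
Qed.

Lemma powers_decay (N : nat) (B : 'M[C]_N.+1) :
  (forall l, root (char_poly B) l -> nc l < 1) ->
  forall i j, conv0 (fun k => (B ^+ k) i j).
Proof.
move=> hroots.
have [rs hrs] := closed_field_poly_normal (char_poly B).
rewrite (monicP (char_poly_monic B)) scale1r in hrs.
have CH := Cayley_Hamilton B.
rewrite hrs rmorph_prod in CH.
have CH' : \prod_(z <- rs) (B - z%:M) = 0.
  rewrite -CH; apply: eq_bigr => z _.
  by rewrite rmorphB /= horner_mx_X horner_mx_C.
have allrs : forall z, z \in rs -> nc z < 1.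
  by move=> z hz; apply: hroots; rewrite hrs root_prod_XsubC.
have comm_lin : forall z w : C, GRing.comm (B - z%:M) (B - w%:M).
  have cs : forall (A : 'M[C]_N.+1) (a : C), GRing.comm A a%:M.
    by move=> A a; apply: scalar_mxC.
  move=> z w; apply: commrB; apply: commr_sym.
    by apply: commrB; [apply: commr_refl | apply: cs].
  apply: commrB; apply: commr_sym; apply: cs.
have key : forall s : seq C, {subset s <= rs} ->
    forall U : 'M[C]_N.+1, (\prod_(z <- s) (B - z%:M)) * U = 0 ->
    forall i j, conv0 (fun k => (B ^+ k * U) i j).
  elim=> [|z s IH] sub U hU i j.
    rewrite big_nil mul1r in hU; rewrite hU => e e0; exists 0%N => k _.
    by rewrite mulr0 mxE nc0.
  rewrite big_cons in hU.
  set V := (B - z%:M) * U.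
  have hV : (\prod_(w <- s) (B - w%:M)) * V = 0.
    rewrite /V mulrA.
    have -> : \prod_(w <- s) (B - w%:M) * (B - z%:M)
              = (B - z%:M) * \prod_(w <- s) (B - w%:M).
      apply: esym; apply: commr_prod => w _; exact: comm_lin.
    exact: hU.
  have sub' : {subset s <= rs} by move=> w hw; apply: sub; rewrite in_cons hw orbT.
  have := IH sub' V hV i j.
  apply: (@decay z); first by apply: allrs; apply: sub; exact: mem_head.
  move=> k.
  have -> : B ^+ k.+1 * U = z *: (B ^+ k * U) + B ^+ k * V.
    rewrite exprSr -mulrA /V mulrBl mulrBr.
    rewrite -[z%:M * U]/(z%:M *m U) mul_scalar_mx -scalerAr.
    by rewrite addrCA subrr addr0.
  by rewrite !mxE.
move=> i j e e0.
have [|K hK] := key rs (fun z h => h) 1 _ i j e e0; first by rewrite CH' mul0r.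
by exists K => k hk; have := hK k hk; rewrite mulr1.
Qed.


Lemma ev_all (I : finType) (P : I -> nat -> Prop) :
  (forall i, exists K, forall k, (K <= k)%N -> P i k) ->
  exists K, forall i k, (K <= k)%N -> P i k.
Proof.
move=> h.
suff [K hK] : exists K, forall i, i \in enum I -> forall k, (K <= k)%N -> P i k.
  by exists K => i k hk; apply: hK => //; rewrite mem_enum.
elim: (enum I) => [|i0 s [K1 hK1]]; first by exists 0%N.
have [K2 hK2] := h i0.
exists (maxn K1 K2) => i; rewrite in_cons => /orP[/eqP->|hi] k hk.
  by apply: hK2; apply: leq_trans hk; apply: leq_maxr.
by apply: hK1 => //; apply: leq_trans hk; apply: leq_maxl.
Qed.

Lemma exists_weight (N : nat) (B : 'M[C]_N) : spectral_radius (mx_abs B) < 1 ->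
  exists (u : 'I_N -> R) (th : R), [/\ 0 <= th, th < 1, (forall i, 0 < u i) &
     forall i, \sum_j nc (B i j) * u j <= th * u i].
Proof.
case: N B => [|N] B hsr.
  by exists (fun _ => 1), 0; split => // -[].
have dec := @powers_decay _ _ (@sr_roots _ _ hsr).
set Bc := mx_abs B in dec.
pose Br : 'M[R]_N.+1 := \matrix_(i, j) nc (B i j).
have Br0 : forall k i j, 0 <= (Br ^+ k) i j.
  elim=> [|k IH] i j; first by rewrite expr0 mxE ler0n.
  rewrite exprS -mulmxE mxE; apply: sumr_ge0 => l _; apply: mulr_ge0 => //.
  by rewrite mxE nc_ge0.
have BrC : forall k i j, (Bc ^+ k) i j = ((Br ^+ k) i j)%:C.
  elim=> [|k IH] i j; first by rewrite !expr0 !mxE; case: (i == j).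
  rewrite !exprS -!mulmxE !mxE rmorph_sum /=; apply: eq_bigr => l _.
  by rewrite IH rmorphM /= !mxE.
set c : R := (2 * (N.+1)%:R)^-1.
have c0 : 0 < c by rewrite /c invr_gt0 mulr_gt0 // ltr0n.
have [K hK] : exists K, forall (ij : 'I_N.+1 * 'I_N.+1) k, (K <= k)%N ->
    (Br ^+ k) ij.1 ij.2 <= c.
  apply: (@ev_all _ (fun ij k => (Br ^+ k) ij.1 ij.2 <= c)) => -[i j].
  have [K hK] := dec i j c c0; exists K => k hk; have := hK k hk.
  by rewrite /= BrC ncR ger0_norm // => /ltW.
pose one : 'cV[R]_N.+1 := const_mx 1.
pose u := \sum_(k < K.+1) (Br ^+ k *m one).
have hu1 : u = one + \sum_(k < K) (Br ^+ k.+1 *m one).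
  by rewrite /u big_ord_recl expr0 mul1mx.
have hu2 : Br *m u = \sum_(k < K) (Br ^+ k.+1 *m one) + Br ^+ K.+1 *m one.
  rewrite /u mulmx_sumr big_ord_recr /=; congr (_ + _).
    by apply: eq_bigr => k _; rewrite mulmxA mulmxE -exprS.
  by rewrite mulmxA mulmxE -exprS.
have pos : forall k i, 0 <= (Br ^+ k *m one) i 0.
  move=> k i; rewrite mxE; apply: sumr_ge0 => j _; rewrite mxE mulr1; exact: Br0.
have U1 : forall i, 1 <= u i 0.
  move=> i; rewrite hu1 mxE [one i 0]mxE lerDl summxE; apply: sumr_ge0 => k _.
  exact: pos.
have small : forall i, (Br ^+ K.+1 *m one) i 0 <= 1 / 2.
  move=> i; rewrite mxE.
  apply: (@le_trans _ _ (\sum_(j < N.+1) c)).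
    apply: ler_sum => j _; rewrite mxE mulr1; exact: (hK (i, j)).
  have nz : (N.+1)%:R != 0 :> R by rewrite pnatr_eq0.
  have hc : c * (N.+1)%:R = 1 / 2.
    by rewrite /c; field; rewrite addrC natr1.
  by rewrite sumr_const card_ord -[c *+ _]mulr_natr hc.
pose U i := u i 0.
pose S := \sum_i U i.
have US : forall i, U i <= S.
  move=> i; rewrite /S (bigD1 i) //= lerDl; apply: sumr_ge0 => j _.
  by apply: le_trans (U1 j); rewrite ler01.
have S1 : 1 <= S by apply: le_trans (U1 ord0) (US ord0).
set t := (2 * S)^-1.
have tS : t * (2 * S) = 1 by rewrite /t mulVf //; apply: lt0r_neq0; lra.
have t0 : 0 < t by rewrite /t invr_gt0; lra.
exists U, (1 - t); split.
- nra.
- lra.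
- by move=> i; apply: lt_le_trans (U1 i); rewrite ltr01.
move=> i.
have e1 : \sum_j nc (B i j) * U j = (Br *m u) i 0.
  by rewrite mxE; apply: eq_bigr => j _; rewrite mxE.
have e2 : U i = 1 + (\sum_(k < K) (Br ^+ k.+1 *m one)) i 0.
  by rewrite /U hu1 mxE mxE.
rewrite e1 hu2 mxE.
have := small i; have := US i; rewrite e2.
set a := (\sum_(k < K) (Br ^+ k.+1 *m one)) i 0.
set b := (Br ^+ K.+1 *m one) i 0.
move=> h1 h2.
have h3 : t * (1 + a) <= t * S by rewrite ler_pM2l.
nra.
Qed.


Lemma mixbound (n : nat) (X : 'M[C]_n) (a b : 'I_n -> R) (th c : R)
  (f : 'I_n -> C) (i : 'I_n) : 0 <= c -> (forall j, nc (f j) <= c * a j) ->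
  \sum_j nc (X i j) * a j <= th * b i ->
  nc (\sum_j X i j * f j) <= c * (th * b i).
Proof.
move=> c0 hf hX; apply: le_trans (nc_sum _ _ _ _) _.
apply: (@le_trans _ _ (c * \sum_j nc (X i j) * a j)); last exact: ler_wpM2l.
rewrite mulr_sumr; apply: ler_sum => j _; rewrite ncM mulrCA.
by apply: ler_wpM2l => //; apply: nc_ge0.
Qed.

Lemma async_conv (n m : nat) (blk : 'I_n -> 'I_m) (G H : 'M[C]_n)
  (w v : 'I_n -> R) (th : R)
  (Om : nat -> {set 'I_m}) (d : 'I_m -> 'I_m -> nat -> nat)
  (ex ey : nat -> 'I_n -> C) :
  0 <= th -> th < 1 -> (forall i, 0 < w i) -> (forall i, 0 < v i) ->
  (forall i, \sum_j nc (G i j) * v j <= th * w i) ->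
  (forall i, \sum_j nc (H i j) * w j <= th * v i) ->
  (forall s K, exists k, (K <= k)%N /\ s \in Om k) ->
  (forall s q k, (d s q k <= k)%N) ->
  (forall s q B, exists K, forall k, (K <= k)%N -> (B <= d s q k)%N) ->
  (forall k i, ey k i = \sum_j G i j * ex (d (blk i) (blk j) k) j) ->
  (forall k i, ex k.+1 i = if blk i \in Om k
                 then \sum_j H i j * ey (d (blk i) (blk j) k) j else ex k i) ->
  forall e, 0 < e -> exists K, forall k, (K <= k)%N -> forall i, nc (ex k i) < e.
Proof.
move=> th0 th1 w0 v0 hG hH hOm hd1 hd2 hy hx.
pose Lx c K := forall k, (K <= k)%N -> forall i, nc (ex k i) <= c * v i.
pose C0 := \sum_i nc (ex 0%N i) / v i.
have C00 : 0 <= C0.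
  by apply: sumr_ge0 => i _; apply: divr_ge0; [apply: nc_ge0 | apply: ltW].
have base : Lx C0 0%N.
  suff : forall k k', (k' <= k)%N -> forall i, nc (ex k' i) <= C0 * v i.
    by move=> h k _ i; apply: (h k).
  elim=> [|k IH] k' hk' i.
    rewrite leqn0 in hk'; rewrite (eqP hk').
    have : nc (ex 0%N i) / v i <= C0.
      rewrite /C0 (bigD1 i) //= lerDl; apply: sumr_ge0 => j _.
      by apply: divr_ge0; [apply: nc_ge0 | apply: ltW].
    by rewrite ler_pdivrMr.
  rewrite leq_eqVlt in hk'; case/orP: hk' => [/eqP->|hk']; last exact: IH.
  rewrite hx; case: ifP => _; last exact: IH.
  have hey : forall j, nc (ey (d (blk i) (blk j) k) j) <= C0 * w j.
    move=> j; rewrite hy.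
    apply: le_trans (@mixbound _ G v w th C0 _ j C00 _ (hG j)) _.
      move=> l; apply: IH; apply: leq_trans (hd1 _ _ _) _; exact: hd1.
    by apply: ler_wpM2l => //; rewrite ler_piMl // ltW.
  apply: le_trans (@mixbound _ H w v th C0 _ i C00 hey (hH i)) _.
  by apply: ler_wpM2l => //; rewrite ler_piMl // ltW.
have step : forall c K, 0 <= c -> Lx c K -> exists K', Lx (c * th * th) K'.
  move=> c K c0 hL.
  have [K1 hK1] : exists K1, forall (sq : 'I_m * 'I_m) k, (K1 <= k)%N ->
      (K <= d sq.1 sq.2 k)%N.
    apply: (@ev_all _ (fun sq k => (K <= d sq.1 sq.2 k)%N)) => -[s q].
    exact: hd2.
  have hey : forall k, (K1 <= k)%N -> forall j, nc (ey k j) <= c * (th * w j).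
    move=> k hk j; rewrite hy; apply: (@mixbound _ G v w th c _ j c0 _ (hG j)).
    by move=> l; apply: hL; apply: (hK1 (blk j, blk l)).
  have [K2 hK2] : exists K2, forall (sq : 'I_m * 'I_m) k, (K2 <= k)%N ->
      (K1 <= d sq.1 sq.2 k)%N.
    apply: (@ev_all _ (fun sq k => (K1 <= d sq.1 sq.2 k)%N)) => -[s q].
    exact: hd2.
  have upd : forall k, (K2 <= k)%N -> forall i, blk i \in Om k ->
      nc (ex k.+1 i) <= c * th * th * v i.
    move=> k hk i hi; rewrite hx hi -!mulrA.
    rewrite (mulrA c).
    apply: (@mixbound _ H w v th (c * th) _ i (mulr_ge0 c0 th0) _ (hH i)).
    move=> j; rewrite -mulrA; apply: hey; exact: (hK2 (blk i, blk j)).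
  have [K3 hK3] : exists K3, forall s k, (K3 <= k)%N ->
      exists ks, [/\ (K2 <= ks)%N, (ks < k)%N & s \in Om ks].
    apply: (@ev_all _ (fun s k => exists ks, [/\ (K2 <= ks)%N, (ks < k)%N & s \in Om ks])).
    move=> s; have [ks [h1 h2]] := hOm s K2.
    by exists ks.+1 => k hk; exists ks; split.
  exists K3 => k hk i.
  have [ks [h1 h2 h3]] := hK3 (blk i) k hk.
  have -> : k = (ks.+1 + (k - ks.+1))%N by rewrite subnKC.
  elim: (k - ks.+1)%N => [|t IH]; first by rewrite addn0; apply: upd.
  rewrite addnS hx; case: ifP => hi; last exact: IH.
  have := upd (ks.+1 + t)%N _ i; rewrite hx hi; apply.
    by apply: leq_trans h1 _; apply: leq_trans (leqnSn _) (leq_addr _ _).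
  by [].
have iter : forall t : nat, exists K, Lx (C0 * (th * th) ^+ t) K.
  elim=> [|t [K hK]]; first by exists 0%N; rewrite expr0 mulr1.
  have [|K' hK'] := step _ K _ hK; first by apply: mulr_ge0 => //; apply: exprn_ge0; apply: mulr_ge0.
  by exists K'; rewrite exprSr !mulrA.
move=> e e0.
pose V := \sum_i v i.
have V0 : 0 <= V by apply: sumr_ge0 => i _; apply: ltW.
have q0 : 0 < e / ((C0 + 1) * (V + 1)).
  by apply: divr_gt0 => //; apply: mulr_gt0; lra.
have tt1 : th * th < 1 by nra.
have [t ht] := @geo (th * th) _ (mulr_ge0 th0 th0) tt1 q0.
have [K hK] := iter t.
exists K => k hk i.
have h1 := hK k hk i.
have vV : v i <= V.
  rewrite /V (bigD1 i) //= lerDl; apply: sumr_ge0 => j _; apply: ltW; exact: v0.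
set p := (th * th) ^+ t in ht h1.
have p0 : 0 <= p by apply: exprn_ge0; apply: mulr_ge0.
have hq : e / ((C0 + 1) * (V + 1)) * ((C0 + 1) * (V + 1)) = e.
  by rewrite divfK //; apply: lt0r_neq0; apply: mulr_gt0; lra.
have : p * ((C0 + 1) * (V + 1)) < e.
  by rewrite -[X in _ < X]hq ltr_pM2r //; apply: mulr_gt0; lra.
have := v0 i => vi0 hpe.
have a1 : C0 * v i <= (C0 + 1) * (V + 1) by nra.
have a2 : p * (C0 * v i) <= p * ((C0 + 1) * (V + 1)) by apply: ler_wpM2l.
have a3 : C0 * p * v i = p * (C0 * v i) by ring.
lra.
Qed.


Lemma nonsing (n : nat) (G H : 'M[C]_n) (w v : 'I_n -> R) (th : R) :
  0 <= th -> th < 1 -> (forall i, 0 < w i) -> (forall i, 0 < v i) ->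
  (forall i, \sum_j nc (G i j) * v j <= th * w i) ->
  (forall i, \sum_j nc (H i j) * w j <= th * v i) ->
  forall z : 'cV[C]_n, G *m z = z -> H *m z = z -> z = 0.
Proof.
move=> th0 th1 w0 v0 hG hH z hGz hHz.
have h1 : forall (s : 'I_1) K, exists k, (K <= k)%N /\ s \in finset.setTfor 'I_1.
  by move=> s K; exists K; rewrite inE.
have h2 : forall (s q : 'I_1) B, exists K, forall k, (K <= k)%N -> (B <= k)%N.
  by move=> s q B; exists B.
have h3 : forall (k : nat) (i : 'I_n), z i 0 = \sum_j G i j * z j 0.
  by move=> k i; rewrite -{1}hGz mxE.
have h4 : forall (k : nat) (i : 'I_n), z i 0 =
    if (ord0 : 'I_1) \in finset.setTfor 'I_1 then \sum_j H i j * z j 0 else z i 0.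
  by move=> k i; rewrite inE -{1}hHz mxE.
have conv := @async_conv n 1 (fun _ => ord0) G H w v th (fun _ => finset.setTfor 'I_1)
  (fun _ _ k => k) (fun _ i => z i 0) (fun _ i => z i 0) th0 th1 w0 v0 hG hH
  h1 (fun _ _ _ => leqnn _) h2 h3 h4.
apply/matrixP => i j; rewrite ord1 mxE.
apply: Normc.eq0_normc; apply/eqP; rewrite eq_le nc_ge0 andbT.
rewrite leNgt; apply/negP => hpos.
have [K hK] := conv _ hpos.
by have := hK K (leqnn _) i; rewrite ltxx.
Qed.

End Aux.

Section Blocks.
Import tagnat.
Variable R : realType.
Local Notation C := R[i].
Variables (m : nat) (p : 'I_m -> nat).
Local Notation n := (\sum_(s < m) p s).

Lemma vblkE (x : 'cV[C]_n) s k : vblk x s k 0 = x (Rank s k) 0.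
Proof. by rewrite /vblk /submxcol mxE. Qed.

Lemma vblk_entry (x y : 'cV[C]_n) i :
  vblk x (sig1 i) = vblk y (sig1 i) -> x i 0 = y i 0.
Proof.
move=> h; have := congr1 (fun M : 'M[C]_(p (sig1 i), 1) => M (sig2 i) ord0) h.
by rewrite !vblkE sig2K.
Qed.

Lemma vblk_mul (A : 'M[C]_n) (X : 'cV[C]_n) s :
  vblk (A *m X) s = \sum_q mblk A s q *m vblk X q.
Proof.
by rewrite /vblk /mblk -{1}(submxblockK A) -{1}(submxcolK X) mul_mxblock_mxrow mxcolK.
Qed.

Lemma subcol_diag c (D : forall s, 'M[C]_(p s)) (Y : 'M[C]_(n, c)) s :
  submxcol (\mxdiag_(s < m) D s *m Y) s = D s *m submxcol Y s.
Proof. by rewrite -{1}(submxcolK Y) mul_mxdiag_mxcol mxcolK. Qed.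

Lemma invmx_diag (D : forall s, 'M[C]_(p s)) : (forall s, D s \in unitmx) ->
  invmx (\mxdiag_(s < m) D s) = \mxdiag_(s < m) invmx (D s).
Proof.
move=> hD.
have DM : \mxdiag_(s < m) invmx (D s) *m \mxdiag_(s < m) D s = 1%:M.
  rewrite -[\mxdiag_(s < m) D s]mulmx1 -/n.
  apply/mxcolP => s; rewrite subcol_diag subcol_diag mulKmx //.
have [_ uM] := mulmx1_unit DM.
by rewrite -[invmx _]mul1mx -DM mulmxK.
Qed.


Lemma step_entry (A : 'M[C]_n) (b xs : 'cV[C]_n) (Db : forall s, 'M[C]_(p s))
  (hD : forall s, Db s \in unitmx) (z : 'I_m -> 'cV[C]_n) (t : 'cV[C]_n)
  (i : 'I_n) : A *m xs = b ->
  vblk t (sig1 i) = vblk (z (sig1 i)) (sig1 i) + invmx (Db (sig1 i)) *m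
     (vblk b (sig1 i) - \sum_q mblk A (sig1 i) q *m vblk (z q) q) ->
  t i 0 - xs i 0 = \sum_j (1%:M - invmx (\mxdiag_(s < m) Db s) *m A) i j *
                          (z (sig1 j) j 0 - xs j 0).
Proof.
move=> hb ht; move: ht; set s := sig1 i => ht.
pose X := \mxcol_(q < m) vblk (z q) q.
have eX : forall j, X j 0 = z (sig1 j) j 0 by move=> j; rewrite mxE vblkE sig2K.
set G := 1%:M - _.
have key : vblk t s = vblk (xs + G *m (X - xs)) s.
  rewrite ht.
  have e1 : vblk (z s) s = vblk X s by rewrite /vblk mxcolK.
  have e2 : \sum_q mblk A s q *m vblk (z q) q = vblk (A *m X) s.
    by rewrite vblk_mul; apply: eq_bigr => q _; rewrite /vblk mxcolK.
  rewrite e1 e2 -hb.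
  have -> : xs + G *m (X - xs) =
            X + invmx (\mxdiag_(s < m) Db s) *m (A *m xs - A *m X).
    rewrite /G mulmxBl mul1mx -mulmxBr mulmxA -[xs - X]opprB mulmxN.
    by rewrite addrA [xs + _]addrC subrK.
  by rewrite /vblk submxcolD invmx_diag // subcol_diag submxcolB.
have := @vblk_entry _ _ i key; rewrite !mxE => ->.
rewrite [xs i 0 + _]addrC addrK; apply: eq_bigr => j _.
by rewrite !mxE ?eX ?vblkE ?sig2K.
Qed.

End Blocks.

Lemma inj_unit (K : fieldType) n (A : 'M[K]_n) :
  (forall z : 'cV[K]_n, A *m z = 0 -> z = 0) -> A \in unitmx.
Proof.
move=> h; rewrite -unitmx_tr -row_free_unit -kermx_eq0.
apply: contraT => /rowV0Pn [x /sub_kermxP hx nx].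
have : x^T = 0 by apply: h; rewrite -[A]trmxK -trmx_mul hx trmx0.
by move=> /(congr1 trmx); rewrite trmxK trmx0 => x0; rewrite x0 eqxx in nx.
Qed.

Theorem theorem3 (R : realType) (m : nat) (p : 'I_m -> nat)
  (p_gt0 : forall s : 'I_m, (0 < p s)%N)
  (A : 'M[R[i]]_(\sum_(s < m) p s)) (b : 'cV[R[i]]_(\sum_(s < m) p s))
  (Mb Fb : forall s : 'I_m, 'M[R[i]]_(p s))
  (Mb_unit : forall s : 'I_m, Mb s \in unitmx)
  (Fb_unit : forall s : 'I_m, Fb s \in unitmx)
  (Omega : nat -> {set 'I_m})
  (delta : 'I_m -> 'I_m -> nat -> nat)
  (x y : nat -> 'cV[R[i]]_(\sum_(s < m) p s)) :
  let M := \mxdiag_(s < m) Mb s in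
  let F := \mxdiag_(s < m) Fb s in
  let Q := block_mx 0 (1%:M - invmx M *m A) (1%:M - invmx F *m A) 0 in
  spectral_radius (mx_abs Q) < 1 ->
  (forall (s : 'I_m) (K : nat), exists k : nat, (K <= k)%N /\ s \in Omega k) ->
  (forall (s q : 'I_m) (k : nat), (delta s q k <= k)%N) ->
  (forall (s q : 'I_m) (B : nat), exists K : nat,
      forall k : nat, (K <= k)%N -> (B <= delta s q k)%N) ->
  (forall (k : nat) (s : 'I_m),
      vblk (y k) s = vblk (x (delta s s k)) s
        + invmx (Mb s) *m (vblk b s
            - \sum_(q < m) mblk A s q *m vblk (x (delta s q k)) q)) ->
  (forall (k : nat) (s : 'I_m),
      vblk (x k.+1) s =
        if s \in Omega k then
          vblk (y (delta s s k)) s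
            + invmx (Fb s) *m (vblk b s
                - \sum_(q < m) mblk A s q *m vblk (y (delta s q k)) q)
        else vblk (x k) s) ->
  exists xs : 'cV[R[i]]_(\sum_(s < m) p s),
    [/\ A *m xs = b,
        (forall z : 'cV[R[i]]_(\sum_(s < m) p s), A *m z = b -> z = xs)
      & cvg_to x xs].
Proof.
move=> M F Q hsr hOm hd1 hd2 hy hx.
have [u [th [th0 th1 u0 hu]]] := @exists_weight R _ Q hsr.
pose w i := u (lshift (\sum_(s < m) p s) i).
pose v i := u (rshift (\sum_(s < m) p s) i).
pose G := 1%:M - invmx M *m A.
pose H := 1%:M - invmx F *m A.
have w0 : forall i, 0 < w i by move=> i; apply: u0.
have v0 : forall i, 0 < v i by move=> i; apply: u0.
have hG : forall i, \sum_j Normc.normc (G i j) * v j <= th * w i.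
  move=> i; apply: le_trans (hu (lshift _ i)).
  rewrite [X in _ <= X]big_split_ord /= [X in _ <= X + _]big1 ?add0r; last first.
    by move=> j _; rewrite /Q block_mxEul mxE nc0 mul0r.
  by apply: ler_sum => j _; rewrite /Q block_mxEur.
have hH : forall i, \sum_j Normc.normc (H i j) * w j <= th * v i.
  move=> i; apply: le_trans (hu (rshift _ i)).
  rewrite [X in _ <= X]big_split_ord /= [X in _ <= _ + X]big1 ?addr0; last first.
    by move=> j _; rewrite /Q block_mxEdr mxE nc0 mul0r.
  by apply: ler_sum => j _; rewrite /Q block_mxEdl.
have hAu : A \in unitmx.
  apply: inj_unit => z hz.
  apply: (@nonsing _ _ G H w v th th0 th1 w0 v0 hG hH z).
    by rewrite /G mulmxBl mul1mx -mulmxA hz mulmx0 subr0.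
  by rewrite /H mulmxBl mul1mx -mulmxA hz mulmx0 subr0.
pose xs := invmx A *m b.
have hAxs : A *m xs = b by rewrite /xs mulKVmx.
exists xs; split => //.
  by move=> z hz; rewrite /xs -hz mulKmx.
move=> e e0.
have hy' : forall k i, y k i 0 - xs i 0 = \sum_j G i j *
    (x (delta (tagnat.sig1 i) (tagnat.sig1 j) k) j 0 - xs j 0).
  move=> k i.
  exact: (@step_entry R m p A b xs Mb Mb_unit
    (fun q => x (delta (tagnat.sig1 i) q k)) (y k) i hAxs (hy k _)).
have hx' : forall k i, x k.+1 i 0 - xs i 0 =
    if tagnat.sig1 i \in Omega k then \sum_j H i j *
      (y (delta (tagnat.sig1 i) (tagnat.sig1 j) k) j 0 - xs j 0)
    else x k i 0 - xs i 0.
  move=> k i; have := hx k (tagnat.sig1 i); case: ifP => hi hk.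
    exact: (@step_entry R m p A b xs Fb Fb_unit
      (fun q => y (delta (tagnat.sig1 i) q k)) (x k.+1) i hAxs hk).
  by rewrite (@vblk_entry R m p _ _ i hk).
exact: (@async_conv R _ m tagnat.sig1 G H w v th Omega delta
  (fun k i => x k i 0 - xs i 0) (fun k i => y k i 0 - xs i 0)
  th0 th1 w0 v0 hG hH hOm hd1 hd2 hy' hx' e e0).
Qed.
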